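(* Let $d>0$, $k\ge1$, $i\ge0$. If $X$ is an $\omega^{2d+1}$-large finite set and $\min X>\max\{k,i,2\}$, then $X$ is $(\omega^d,k,i)$-persistent.
   Context: Strings are finite binary strings with $\preceq$ the initial-segment order; $2^i$ also denotes the set of strings of length $i$; a tree is a set of strings closed under initial segments; a leaf of a finite tree is a $\preceq$-maximal element. For finite $X=\{x_0<\dots<x_n\}$, a finite tree $T$ is $X$-quasistrong if $T\cap 2^{x_i}\ne\emptyset$ for all $i\le n$ and for each $i<n$ every $\sigma\in T\cap2^{x_i}$ has exactly two incompatible extensions in $T\cap 2^{x_{i+1}}$. Largeness: $X$ is $\omega$-large if $|X|>\min X$; $X$ is $\omega^d\cdot n$-large if it is the union of $n$ many $\omega^d$-large sets $X_0<\dots<X_{n-1}$ (where $A<B$ means $\max A<\min B$); $X$ is $\omega^{d+1}$-large if $X=\{\min X\}\cup X_1$ with $\min X_1>\min X$ and $X_1$ $\omega^d\cdot\min X$-large. Persistence ($d,m,k\ge1$, $\alpha=\omega^d\cdot m$, $X$ nonempty finite): $X$ is $(\alpha,k,0)$-persistent iff $\alpha$-large; for $i\ge1$, $X$ is $(\alpha,k,i)$-persistent iff $X$ contains an $(\alpha,k,i-1)$-persistent subset $Y$ such that for every $X$-quasistrong tree $T$ and every $C:T\cap 2^{\max X}\to k$ there exist $c<k$ and a $Y$-quasistrong finite tree $S\subseteq T$ all of whose leaves have extensions in $C^{-1}(c)$. *)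

(* Defs.v *)
From mathcomp Require Import all_boot.
From mathcomp Require Import finmap.

Set Implicit Arguments.
Unset Strict Implicit.
Unset Printing Implicit Defensive.

Local Open Scope fset_scope.

(* Binary strings are [seq bool]; the initial-segment order s ⪯ t is
   [prefix s t] from seq.v.  Finite sets of naturals are [{fset nat}],
   finite sets of strings are [{fset (seq bool)}]. *)

(* max of a finite set of naturals (0 on the empty set; only used on
   nonempty sets) *)
Definition fmax (X : {fset nat}) : nat := \max_(x <- enum_fset X) x.

Definition fset_lt (A B : {fset nat}) : Prop :=
  forall a b, a \in A -> b \in B -> a < b.

Definition omega_large (X : {fset nat}) : Prop :=
  exists m, [/\ m \in X, (forall x, x \in X -> m <= x) & m < #|` X|].

(* X is (P * n)-large : union of n sets X_0 < ... < X_{n-1}, each P-large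
   (n = 0 : X is empty) *)
Fixpoint times_large (P : {fset nat} -> Prop) (n : nat) (X : {fset nat}) : Prop :=
  match n with
  | 0 => X = fset0
  | n'.+1 => exists A B, [/\ P A, times_large P n' B, fset_lt A B & X = A `|` B]
  end.

(* large d X : X is omega^d-large (for d >= 1; d = 0, i.e. 1-large, is taken
   to mean nonempty, and is never used here). *)
Fixpoint large (d : nat) (X : {fset nat}) : Prop :=
  match d with
  | 0 => X != fset0
  | 1 => omega_large X
  | d'.+1 =>
      exists m X1, [/\ m \in X, (forall x, x \in X -> m <= x),
                     X = m |` X1, (forall x, x \in X1 -> m < x)
                   & times_large (large d') m X1]
  end.

Definition large_mul (d m : nat) (X : {fset nat}) : Prop :=
  times_large (large d) m X.

Definition is_tree (T : {fset (seq bool)}) : Prop :=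
  forall s t, s \in T -> prefix t s -> t \in T.

Definition is_leaf (S : {fset (seq bool)}) (s : seq bool) : Prop :=
  s \in S /\ (forall t, t \in S -> prefix s t -> t = s).

Definition quasistrong (X : {fset nat}) (T : {fset (seq bool)}) : Prop :=
  [/\ is_tree T,
      (forall x, x \in X -> exists s, s \in T /\ size s = x)
    & (forall x y, x \in X -> y \in X -> x < y ->
         (forall z, z \in X -> ~ (x < z /\ z < y)) ->
         forall s, s \in T -> size s = x ->
         exists t1 t2,
           [/\ [/\ t1 \in T, t2 \in T, size t1 = y & size t2 = y],
               prefix s t1, prefix s t2,
               (~~ prefix t1 t2 /\ ~~ prefix t2 t1)
             & forall t, t \in T -> size t = y -> prefix s t ->
                 t = t1 \/ t = t2])].

Fixpoint persistent (d m k i : nat) (X : {fset nat}) : Prop :=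
  match i with
  | 0 => X != fset0 /\ large_mul d m X
  | i'.+1 =>
      X != fset0 /\
      exists Y : {fset nat},
        [/\ Y `<=` X, persistent d m k i' Y &
         forall T : {fset (seq bool)}, quasistrong X T ->
         forall C : seq bool -> nat,
           (forall t, t \in T -> size t = fmax X -> C t < k) ->
           exists c, c < k /\
             exists S : {fset (seq bool)},
               [/\ S `<=` T, quasistrong Y S &
                forall s, is_leaf S s ->
                  exists t, [/\ t \in T, size t = fmax X, prefix s t & C t = c]]]
  end.

(* Main.v *)
Require Import Defs.
From mathcomp Require Import all_boot.
From mathcomp Require Import finmap.
From mathcomp Require Import zify.
From Stdlib Require Import Classical.

Set Implicit Arguments. Unset Strict Implicit. Unset Printing Implicit Defensive.
Local Open Scope fset_scope.

Lemma fmin_ex (A : {fset nat}) : A != fset0 ->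
  exists2 m, m \in A & forall x, x \in A -> m <= x.
Proof.
move=> /fset0Pn hA; case: (ex_minnP hA) => m mA mmin.
by exists m.
Qed.

Lemma max_seq_in (s : seq nat) : s != [::] -> \max_(x <- s) x \in s.
Proof.
elim: s => // a s IH _; rewrite big_cons inE.
case: (eqVneq s [::]) => [->|hs]; first by rewrite big_nil maxn0 eqxx.
case: (leqP a (\max_(x <- s) x)) => h.
  by rewrite (IH hs) orbT.
by rewrite eqxx.
Qed.

Lemma fmax_in (A : {fset nat}) : A != fset0 -> fmax A \in A.
Proof.
move=> /fset0Pn [x xA]; rewrite /fmax.
have : enum_fset A != [::] by apply/negP => /eqP he; move: xA; rewrite -[x \in A]/(x \in enum_fset A) he.
by move/max_seq_in.
Qed.

Lemma fmax_ge (A : {fset nat}) x : x \in A -> x <= fmax A.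
Proof.
move=> xA; rewrite /fmax; exact: (@leq_bigmax_seq _ _ predT id x).
Qed.
Definition cnt (W : {fset nat}) a b := #|` [fset x in W | (a < x) && (x <= b)]|.

Lemma in_cnt (W : {fset nat}) a b x : (x \in [fset x in W | (a < x) && (x <= b)]) = [&& x \in W, a < x & x <= b].
Proof. by rewrite !inE. Qed.

Lemma prefix_eq (a b : seq bool) : prefix a b -> size a = size b -> a = b.
Proof. by rewrite prefixE => /eqP h hs; rewrite -h hs take_size. Qed.

Lemma prefix_common (a b c : seq bool) : prefix a c -> prefix b c -> prefix a b || prefix b a.
Proof.
rewrite !prefixE => /eqP ha /eqP hb.
case: (leqP (size a) (size b)) => h.
  apply/orP; left; apply/eqP.
  by rewrite -[in RHS]ha -[b]hb take_takel.
apply/orP; right; apply/eqP.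
by rewrite -[in RHS]hb -[a]ha take_takel // ltnW.
Qed.

Lemma prefix_common_eq (a b c : seq bool) : prefix a c -> prefix b c -> size a = size b -> a = b.
Proof.
move=> ha hb hs; case/orP: (prefix_common ha hb) => h; first exact: prefix_eq.
by apply/esym/prefix_eq.
Qed.

Lemma comp_le (u w : seq bool) : prefix u w || prefix w u -> size u <= size w -> prefix u w.
Proof.
case/orP => // h hs; have e : w = u by apply: prefix_eq => //; apply/eqP; rewrite eqn_leq hs size_prefix.
by rewrite e prefix_refl.
Qed.

Definition desc (T : {fset (seq bool)}) (s : seq bool) (y : nat) :=
  [fset u in T | (size u == y) && prefix s u].

Lemma cardfs_pos (K : choiceType) (A : {fset K}) x : x \in A -> 0 < #|` A|.
Proof. by move=> xA; rewrite lt0n cardfs_eq0; apply/fset0Pn; exists x. Qed.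

Lemma desc_count W T : quasistrong W T -> forall n s y,
  cnt W (size s) y = n -> s \in T -> size s \in W -> y \in W -> size s <= y ->
  2 ^ n <= #|` desc T s y|.
Proof.
case=> Ttree Tlev Tbr; elim=> [|n IH] s y hc sT sW yW sy.
  have ey : size s = y.
    apply/eqP; rewrite eqn_leq sy /=; apply: contraT; rewrite -ltnNge => hlt.
    have : 0 < cnt W (size s) y by apply: (@cardfs_pos _ _ y); rewrite in_cnt yW hlt leqnn.
    by rewrite hc.
  by rewrite expn0; apply: (@cardfs_pos _ _ s); rewrite !inE sT ey eqxx prefix_refl.
set F := [fset x in W | (size s < x) && (x <= y)].
have : exists x, x \in F.
  apply/fset0Pn; rewrite -cardfs_eq0; apply/negP => /eqP h0.
  by move: hc; rewrite /cnt -/F h0.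
case/ex_minnP => xp; rewrite in_cnt => /and3P [xpW sxp xpy] xpmin.
have consec : forall z, z \in W -> ~ (size s < z /\ z < xp).
  move=> z zW [h1 h2]; have := xpmin z; rewrite in_cnt zW h1 /= (leq_trans (ltnW h2) xpy) => /(_ isT).
  by rewrite leqNgt h2.
have [t1 [t2 [[t1T t2T st1 st2] pt1 pt2 [n12 n21] uniq12]]] :=
  Tbr _ _ sW xpW sxp consec s sT erefl.
have hcn : forall t : seq bool, size t = xp -> cnt W (size t) y = n.
  move=> t ->; move: hc; rewrite /cnt -/F.
  have -> : F = xp |` [fset x in W | (xp < x) && (x <= y)].
    apply/fsetP => x; rewrite !inE; apply/idP/idP.
      case/and3P => xW h1 h2; case: (eqVneq x xp) => //= hne.
      rewrite xW h2 andbT /=; have := xpmin x; rewrite in_cnt xW h1 h2 => /(_ isT) hle.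
      by rewrite ltn_neqAle eq_sym hne hle.
    case/orP => [/eqP ->|/and3P [xW h1 h2]]; first by rewrite xpW sxp xpy.
    by rewrite xW h2 (ltn_trans sxp h1).
  by rewrite cardfsU1 !inE ltnn andbF /= add1n => -[].
have d1 : 2 ^ n <= #|` desc T t1 y|.
  by apply: IH; [exact: hcn | done | rewrite st1 | done | rewrite st1].
have d2 : 2 ^ n <= #|` desc T t2 y|.
  by apply: IH; [exact: hcn | done | rewrite st2 | done | rewrite st2].
have sub : desc T t1 y `|` desc T t2 y `<=` desc T s y.
  apply/fsubsetP => u; rewrite !inE => /orP [] /and3P [uT /eqP su pu];
  by rewrite uT su eqxx (prefix_trans _ pu).
have disj : desc T t1 y `&` desc T t2 y = fset0.
  apply/fsetP => u; rewrite !inE; apply/negP => /andP [/and3P [_ _ p1] /and3P [_ _ p2]].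
  have e : t1 = t2 by apply: (prefix_common_eq p1 p2); rewrite st1 st2.
  by move: n12; rewrite e prefix_refl.
have := cardfsUI (desc T t1 y) (desc T t2 y); rewrite disj cardfs0 addn0 => e.
by rewrite expnS mul2n -addnn (leq_trans (leq_add d1 d2)) // -e fsubset_leq_card.
Qed.
Lemma pigeon_aux (T : eqType) (P : T -> nat -> Prop) k (s : seq T) :
  uniq s -> (forall u, u \in s -> exists c, c < k /\ P u c) ->
  (exists u1 u2 c, [/\ u1 \in s, u2 \in s, u1 != u2, P u1 c & P u2 c]) \/
  (exists cs : seq nat, [/\ uniq cs, size cs = size s, all (fun c => c < k) cs &
      forall c, c \in cs -> exists2 u, u \in s & P u c]).
Proof.
elim: s => [|a s IH] /=.
  by move=> _ _; right; exists [::].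
case/andP => anot us hP.
have [c [ck Pc]] := hP a (mem_head _ _).
have hP' : forall u, u \in s -> exists c, c < k /\ P u c.
  by move=> u hu; apply: hP; rewrite inE hu orbT.
case: (IH us hP') => [[u1 [u2 [c' [h1 h2 h3 h4 h5]]]]|[cs [ucs scs acs hcs]]].
  by left; exists u1, u2, c'; rewrite !inE h1 h2 !orbT.
case: (boolP (c \in cs)) => hc.
  have [u us' Pu] := hcs c hc.
  left; exists a, u, c; split => //; rewrite ?inE ?eqxx ?us' ?orbT //.
  by apply: contra anot => /eqP ->.
right; exists (c :: cs); split => //=; first by rewrite hc.
- by rewrite scs.
- by rewrite ck.
move=> c0; rewrite inE => /orP [/eqP ->|/hcs [u hu Pu]].
  by exists a; rewrite ?mem_head.
by exists u; rewrite // inE hu orbT.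
Qed.

Lemma pigeon (T : eqType) (P : T -> nat -> Prop) k (s : seq T) :
  uniq s -> k < size s -> (forall u, u \in s -> exists c, c < k /\ P u c) ->
  exists u1 u2 c, [/\ u1 \in s, u2 \in s, u1 != u2, P u1 c & P u2 c].
Proof.
move=> us hk hP; case: (pigeon_aux us hP) => // [[cs [ucs scs acs _]]].
have : size cs <= size (iota 0 k).
  apply: uniq_leq_size => // c hc; rewrite mem_iota /=.
  by move/allP: acs => /(_ c hc).
by rewrite size_iota scs leqNgt hk.
Qed.

Definition good (T : {fset (seq bool)}) (W : {fset nat}) (C : seq bool -> nat) c (u : seq bool) :=
  exists t, [/\ t \in T, size t = fmax W, prefix u t & C t = c].

Definition prefset (s : seq bool) : {fset (seq bool)} := [fset take j s | j in iota 0 (size s).+1].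

Lemma mem_prefset s u : (u \in prefset s) = prefix u s.
Proof.
apply/idP/idP.
  by case/imfsetP => j _ ->; apply: prefix_take.
move=> pu; apply/imfsetP; exists (size u).
  by rewrite mem_iota /= add0n ltnS size_prefix.
by move: pu; rewrite prefixE => /eqP.
Qed.

Lemma top_ext W T s : quasistrong W T -> s \in T -> size s \in W ->
  exists t, [/\ t \in T, size t = fmax W & prefix s t].
Proof.
move=> qT sT sW.
have WW : W != fset0 by apply/fset0Pn; exists (size s).
have := desc_count qT erefl sT sW (fmax_in WW) (fmax_ge sW).
move/(leq_trans (expn_gt0 2 _)); rewrite lt0n cardfs_eq0 => /fset0Pn [t].
by rewrite !inE => /and3P [tT /eqP st pt]; exists t.
Qed.

Lemma card1_eq (A : {fset nat}) a x : #|` A| = 1 -> a \in A -> x \in A -> x = a.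
Proof.
move=> h1 aA xA; apply/eqP; apply: contraT => hne.
have := cardfsD1 a A; rewrite h1 aA add1n => /eqP; rewrite eqSS eq_sym => /eqP /cardfs0_eq h0.
have : x \in A `\ a by rewrite !inE hne xA.
by rewrite h0.
Qed.

Lemma union_branch (Y' : {fset nat}) (Sa Sb : {fset (seq bool)}) ua ub x x'' w :
  ua != ub -> size ua = size ub ->
  (forall u, u \in Sa -> prefix u ua || prefix ua u) ->
  (forall u, u \in Sb -> prefix u ub || prefix ub u) ->
  quasistrong Y' Sa -> x \in Y' -> x'' \in Y' -> x < x'' ->
  (forall z, z \in Y' -> ~ (x < z /\ z < x'')) ->
  size ua <= x -> w \in Sa -> size w = x ->
  exists t1 t2,
    [/\ [/\ t1 \in Sa `|` Sb, t2 \in Sa `|` Sb, size t1 = x'' & size t2 = x''],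
        prefix w t1, prefix w t2, (~~ prefix t1 t2 /\ ~~ prefix t2 t1)
      & forall t, t \in Sa `|` Sb -> size t = x'' -> prefix w t -> t = t1 \/ t = t2].
Proof.
move=> nab sab ca cb [_ _ br] xY x''Y lt nb sx wS sw.
have [t1 [t2 [[t1S t2S s1 s2] p1 p2 inc un]]] := br _ _ xY x''Y lt nb w wS sw.
exists t1, t2; split => //; rewrite ?inE ?t1S ?t2S //.
move=> t; rewrite inE => /orP [tS|tS] st pt; first exact: un.
exfalso; move/negP: nab; apply; apply/eqP.
have pa : prefix ua w by apply: comp_le; [rewrite orbC; apply: ca | rewrite sw].
have pb : prefix ub t by apply: comp_le; [rewrite orbC; apply: cb | rewrite st -sab ltnW // (leq_ltn_trans sx)].
by apply: (prefix_common_eq (prefix_trans pa pt) pb).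
Qed.

Lemma build W T k C : quasistrong W T -> (forall t, t \in T -> size t = fmax W -> C t < k) ->
  forall N (Y : {fset nat}), #|` Y| = N.+1 -> Y `<=` W ->
  (forall y y', y \in Y -> y' \in Y -> y < y' -> k < 2 ^ cnt W y y') ->
  forall s, s \in T -> size s \in Y -> (forall z, z \in Y -> size s <= z) ->
  exists c, c < k /\ exists S, [/\ S `<=` T, quasistrong Y S, s \in S,
     (forall u, u \in S -> prefix u s || prefix s u) & (forall u, u \in S -> good T W C c u)].
Proof.
move=> qT hC; have [Ttree Tlev Tbr] := qT.
elim=> [|N IH] Y hY YW sp s sT sY smin.
  have sW : size s \in W by move/fsubsetP: YW; apply.
  have [t [tT st pt]] := top_ext qT sT sW.
  exists (C t); split; first exact: hC.
  exists (prefset s); split.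
  - by apply/fsubsetP => u; rewrite mem_prefset => pu; apply: Ttree pu.
  - split.
    + by move=> u v; rewrite !mem_prefset => pu pv; apply: prefix_trans pv pu.
    + by move=> x xY; exists s; rewrite mem_prefset prefix_refl (card1_eq hY sY xY).
    + move=> x y xY yY lt; exfalso.
      by move: lt; rewrite (card1_eq hY sY xY) (card1_eq hY sY yY) ltnn.
  - by rewrite mem_prefset prefix_refl.
  - by move=> u; rewrite mem_prefset => ->.
  - by move=> u; rewrite mem_prefset => pu; exists t; split => //; apply: prefix_trans pt.
set y := size s; set Y' := Y `\ y.
have hY' : #|` Y'| = N.+1 by move: hY; rewrite (cardfsD1 y) sY add1n => -[].
have Y'Y : Y' `<=` Y by apply: fsubD1set.
have Y'W : Y' `<=` W := fsubset_trans Y'Y YW.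
have Y'ne : Y' != fset0 by rewrite -cardfs_eq0 hY'.
have [y' y'Y' y'min] := fmin_ex Y'ne.
have y'Y : y' \in Y by move/fsubsetP: Y'Y; apply.
have yy' : y < y'.
  move: y'Y'; rewrite !inE => /andP [hne _]; rewrite ltn_neqAle eq_sym hne.
  exact: smin.
have yW : y \in W by move/fsubsetP: YW; apply.
have y'W : y' \in W by move/fsubsetP: YW; apply.
set D := desc T s y'.
have kD : k < #|` D|.
  apply: (leq_trans (sp _ _ sY y'Y yy')).
  have := desc_count qT (erefl (cnt W (size s) y')) sT yW y'W (ltnW yy'); done.
pose P := fun u c => exists S, [/\ S `<=` T, quasistrong Y' S, u \in S,
     (forall v, v \in S -> prefix v u || prefix u v) & (forall v, v \in S -> good T W C c v)].
have hcol : forall u, u \in enum_fset D -> exists c, c < k /\ P u c.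
  move=> u; rewrite -[u \in enum_fset D]/(u \in D) !inE => /and3P [uT /eqP su pu].
  apply: (IH Y' hY' Y'W) => //.
  - by move=> a b aY bY; apply: sp; [move/fsubsetP: Y'Y; apply | move/fsubsetP: Y'Y; apply].
  - by rewrite su.
  - by rewrite su.
have [u1 [u2 [c [u1D u2D n12 [S1 [S1T q1 u1S c1 g1]] [S2 [S2T q2 u2S c2 g2]]]]]] :=
  pigeon (fset_uniq D) kD hcol.
have memD : forall u, u \in enum_fset D -> [/\ u \in T, size u = y' & prefix s u].
  by move=> u; rewrite -[u \in enum_fset D]/(u \in D) !inE => /and3P [? /eqP ? ?].
have [u1T su1 pu1] := memD _ u1D.
have [u2T su2 pu2] := memD _ u2D.
have [tr1 lv1 br1] := q1.
have [tr2 lv2 br2] := q2.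
exists c; split.
  by have [t [tT st _ <-]] := g1 _ u1S; apply: hC.
have compS : forall u, u \in S1 `|` S2 -> prefix u s || prefix s u.
  move=> u; rewrite inE => /orP [] uS.
    case/orP: (c1 _ uS) => h; first exact: prefix_common h pu1.
    by rewrite (prefix_trans pu1 h) orbT.
  case/orP: (c2 _ uS) => h; first exact: prefix_common h pu2.
  by rewrite (prefix_trans pu2 h) orbT.
exists (S1 `|` S2); split.
- by rewrite fsubUset S1T S2T.
- split.
  + move=> a b; rewrite !inE => /orP [aS|aS] pb.
      by rewrite (tr1 _ _ aS pb).
    by rewrite (tr2 _ _ aS pb) orbT.
  + move=> x xY; case: (eqVneq x y) => [->|nxy].
      by exists s; rewrite inE (tr1 _ _ u1S pu1).
    have xY' : x \in Y' by rewrite !inE nxy xY.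
    have [w [wS sw]] := lv1 _ xY'.
    by exists w; rewrite inE wS.
  + move=> x x'' xY x''Y lt nb w wS sw.
    case: (eqVneq x y) => [exy|nxy].
      have x''Y' : x'' \in Y' by rewrite !inE x''Y andbT; apply: contraTneq lt => ->; rewrite exy ltnn.
      have ex'' : x'' = y'.
        apply/eqP; rewrite eqn_leq y'min // andbT; apply: contraT; rewrite -ltnNge => hlt.
        by exfalso; apply: (nb y' y'Y); rewrite exy.
      have ews : w = s.
        have pw : prefix w u1 || prefix w u2.
          move: wS; rewrite inE => /orP [] wS.
            by rewrite (@comp_le w u1) // ?(c1 _ wS) // sw su1 exy ltnW.
          by rewrite (@comp_le w u2) ?orbT // ?(c2 _ wS) // sw su2 exy ltnW.
        case/orP: pw => pw.
          by apply: (prefix_common_eq pw pu1); rewrite sw exy.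
        by apply: (prefix_common_eq pw pu2); rewrite sw exy.
      have ninc : forall a b : seq bool, a != b -> size a = size b -> ~~ prefix a b.
        by move=> a b nab sab; apply: contra nab => pab; apply/eqP; apply: prefix_eq.
      exists u1, u2; split.
      * by rewrite !inE u1S u2S orbT su1 su2 ex''.
      * by rewrite ews.
      * by rewrite ews.
      * by split; apply: ninc; rewrite ?su1 ?su2 // eq_sym.
      * move=> t; rewrite inE => /orP [] tS st _.
          left; apply: prefix_eq; last by rewrite st su1.
          by apply: comp_le; [apply: c1 | rewrite st su1 ex''].
        right; apply: prefix_eq; last by rewrite st su2.
        by apply: comp_le; [apply: c2 | rewrite st su2 ex''].
    have ylx : y <= x by apply: smin.
    have xY' : x \in Y' by rewrite !inE nxy xY.
    have x''Y' : x'' \in Y'.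
      by rewrite !inE x''Y andbT; apply: contraTneq lt => ->; rewrite -leqNgt.
    have nb' : forall z, z \in Y' -> ~ (x < z /\ z < x'').
      by move=> z zY'; apply: nb; move/fsubsetP: Y'Y; apply.
    move: wS; rewrite inE => /orP [] wS.
      apply: (union_branch (Y' := Y') n12 _ c1 c2 q1 xY' x''Y' lt nb') => //.
      - by rewrite su1 su2.
      - by rewrite su1; apply: y'min.
    rewrite fsetUC.
    apply: (union_branch (Y' := Y') _ _ c2 c1 q2 xY' x''Y' lt nb') => //.
    - by rewrite eq_sym.
    - by rewrite su1 su2.
    - by rewrite su2; apply: y'min.
- by rewrite inE (tr1 _ _ u1S pu1).
- exact: compS.
- by move=> u; rewrite inE => /orP [] uS; [apply: g1 | apply: g2].
Qed.

Lemma step_lemma (W Y : {fset nat}) k : Y `<=` W -> Y != fset0 ->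
  (forall y y', y \in Y -> y' \in Y -> y < y' -> k < 2 ^ cnt W y y') ->
  forall T, quasistrong W T -> forall C : seq bool -> nat,
  (forall t, t \in T -> size t = fmax W -> C t < k) ->
  exists c, c < k /\ exists S : {fset (seq bool)},
    [/\ S `<=` T, quasistrong Y S &
     forall s, is_leaf S s -> exists t, [/\ t \in T, size t = fmax W, prefix s t & C t = c]].
Proof.
move=> YW Yne sp T qT C hC.
have [y0 y0Y y0min] := fmin_ex Yne.
have y0W : y0 \in W by move/fsubsetP: YW; apply.
have [_ lv _] := qT.
have [s [sT ss]] := lv _ y0W.
have hY : #|` Y| = (#|` Y|).-1.+1 by rewrite prednK // lt0n cardfs_eq0.
have sY : size s \in Y by rewrite ss.
have smin : forall z, z \in Y -> size s <= z by rewrite ss.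
have [c [ck [S [ST qS sS _ gS]]]] := build qT hC hY YW sp sT sY smin.
exists c; split => //; exists S; split => //.
by move=> u [uS _]; apply: gS.
Qed.
Lemma large_ne e A : 0 < e -> large e A -> A != fset0.
Proof.
case: e => // [[|e]] _ /=.
  by case=> m [mA _ _]; apply/fset0Pn; exists m.
by case=> m [X1 [mA _ _ _ _]]; apply/fset0Pn; exists m.
Qed.

Lemma tl_ne P n B : (forall A, P A -> A != fset0) -> 0 < n -> times_large P n B -> B != fset0.
Proof.
move=> hP; case: n => // n _ /= [A [R [PA _ _ ->]]].
have /fset0Pn [x xA] := hP _ PA; apply/fset0Pn; exists x; by rewrite inE xA.
Qed.

Lemma card_interval (A : {fset nat}) lo hi :
  (forall a, a \in A -> lo <= a < hi) -> #|` A| <= hi - lo.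
Proof.
move=> h; have sub : A `<=` [fset x | x in iota lo (hi - lo)].
  apply/fsubsetP => a aA; have /andP [h1 h2] := h a aA.
  by rewrite !inE /= mem_iota h1 /= subnKC // ltnW // (leq_ltn_trans h1).
apply: leq_trans (fsubset_leq_card sub) _.
apply: leq_trans (leq_imfset_card _ _ _) _.
apply: (leq_trans (uniq_leq_size (enum_finmem_uniq _) (s2 := iota lo (hi - lo)) _)).
  by move=> x; rewrite enum_finmemE.
by rewrite size_iota.
Qed.

Lemma large_card e A a : 0 < e -> large e A -> a \in A -> (forall x, x \in A -> a <= x) -> a < #|` A|.
Proof.
elim: e A a => // -[|e] IH A a _ /=.
  case=> m [mA mmin mc] aA amin.
  by have -> : a = m by apply/eqP; rewrite eqn_leq amin // mmin.
case=> m [X1 [mA mmin eA X1gt tl]] aA amin.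
have -> : a = m by apply/eqP; rewrite eqn_leq amin // mmin.
case: m mA mmin eA X1gt tl => [|m] mA mmin eA X1gt tl.
  by rewrite lt0n cardfs_eq0; apply/fset0Pn; exists 0.
case: tl => [B [R [lB _ _ eX1]]].
have [b bB bmin] := fmin_ex (large_ne (isT : 0 < e.+1) lB).
have hb := IH B b isT lB bB bmin.
have bX1 : b \in X1 by rewrite eX1 inE bB.
have mb := X1gt b bX1.
have : #|` B| <= #|` X1| by apply: fsubset_leq_card; rewrite eX1 fsubsetUl.
have : #|` A| = #|` X1|.+1.
  rewrite eA cardfsU1; case: (boolP (m.+1 \in X1)) => [/X1gt|]; first by rewrite ltnn.
  by move=> _; rewrite add1n.
move=> h1 h2; rewrite h1 ltnS; apply: leq_trans _ h2; apply: ltnW; exact: ltn_trans mb hb.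
Qed.

Lemma tl_dbl (P : {fset nat} -> Prop) n B :
  (forall A, P A -> forall lo, 0 < lo -> (forall a, a \in A -> lo <= a) -> exists2 b, b \in A & 2 * lo <= b) ->
  0 < n -> times_large P n B -> forall lo, 0 < lo -> (forall b, b \in B -> lo <= b) ->
  exists2 b, b \in B & 2 ^ n * lo <= b.
Proof.
move=> hP; elim: n B => // n IH B _ /= [A [R [PA tR ltAR eB]]] lo lo0 hlo.
have hloA : forall a, a \in A -> lo <= a by move=> a aA; apply: hlo; rewrite eB inE aA.
have [bA bAA hbA] := hP A PA lo lo0 hloA.
case: n IH tR => [|n] IH tR.
  by exists bA; rewrite ?eB ?inE ?bAA // expn1.
have [b bR hb] : exists2 b, b \in R & 2 ^ n.+1 * (2 * lo) <= b.
  apply: IH => //; first by rewrite muln_gt0.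
  move=> b bR; apply: leq_trans hbA _; apply: ltnW; exact: ltAR.
by exists b; [rewrite eB inE bR orbT | rewrite expnSr -mulnA].
Qed.

Lemma large_dbl e A : 0 < e -> large e A -> forall lo, 0 < lo -> (forall a, a \in A -> lo <= a) ->
  exists2 b, b \in A & 2 * lo <= b.
Proof.
elim: e A => // -[|e] IH A _ /=.
  case=> m [mA mmin mc] lo lo0 hlo.
  case: (boolP ([fset a in A | 2 * lo <= a] == fset0)) => [/eqP h0|/fset0Pn [b]]; last first.
    by rewrite !inE => /andP [bA hb]; exists b.
  have : #|` A| <= 2 * lo - lo.
    apply: card_interval => a aA; rewrite hlo //=; rewrite ltnNge; apply/negP => ha.
    have : a \in [fset a in A | 2 * lo <= a] by rewrite !inE aA ha.
    by rewrite h0.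
  have := hlo m mA; lia.
case=> m [X1 [mA mmin eA X1gt tl]] lo lo0 hlo.
have lom := hlo m mA.
have m0 : 0 < m by apply: leq_trans lom.
have [b bX1 hb] := tl_dbl (fun B lB => IH B isT lB) m0 tl (isT : 0 < m.+1) (fun x hx => X1gt x hx).
exists b; first by rewrite eA inE bX1 orbT.
apply: leq_trans hb; apply: leq_mul; last by apply: leq_trans lom _.
by rewrite -{1}(expn1 2) leq_pexp2l.
Qed.

Lemma large_exp e A m : 1 < e -> large e A -> m \in A -> (forall x, x \in A -> m <= x) -> 0 < m ->
  exists2 b, b \in A & 2 ^ m <= b.
Proof.
case: e => [|[|e]] //= _ [m' [X1 [m'A m'min eA X1gt tl]]] mA mmin m0.
have em : m' = m by apply/eqP; rewrite eqn_leq m'min // mmin.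
subst m'.
have [b bX1 hb] := tl_dbl (fun B lB => large_dbl (isT : 0 < e.+1) lB) m0 tl (isT : 0 < m.+1) (fun x hx => X1gt x hx).
exists b; first by rewrite eA inE bX1 orbT.
by apply: leq_trans hb; rewrite leq_pmulr.
Qed.

Lemma tl_sup (P : {fset nat} -> Prop) (Wb : {fset nat}) :
  (forall A A', P A -> A `<=` A' -> A' `<=` Wb -> P A') ->
  (forall A, P A -> A != fset0) ->
  forall n' n B W1, 0 < n' -> n' <= n -> times_large P n B -> B `<=` W1 -> W1 `<=` Wb ->
  times_large P n' W1.
Proof.
move=> hcl hne; elim=> // n' IH n B W1 _ hn tl BW1 W1Wb.
case: n hn tl => // n hn /= [A0 [B0 [PA0 tB0 lt0 eB]]].
have A0W1 : A0 `<=` W1 by apply: fsubset_trans BW1; rewrite eB fsubsetUl.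
case: n' IH hn => [|n'] IH hn.
  exists W1, fset0; split => //; last by rewrite fsetU0.
  exact: hcl PA0 A0W1 W1Wb.
have B0ne : B0 != fset0 by apply: tl_ne hne _ tB0; lia.
have [s sB0 smin] := fmin_ex B0ne.
exists [fset w in W1 | w < s], [fset w in W1 | s <= w]; split.
- apply: hcl PA0 _ _.
    apply/fsubsetP => a aA; rewrite !inE (fsubsetP A0W1 a aA) /=; exact: lt0.
  by apply/fsubsetP => w; rewrite !inE => /andP [h _]; apply: (fsubsetP W1Wb).
- apply: (IH n B0) => //.
  + apply/fsubsetP => b bB; rewrite !inE smin // andbT.
    by apply: (fsubsetP BW1); rewrite eB inE bB orbT.
  + by apply/fsubsetP => w; rewrite !inE => /andP [h _]; apply: (fsubsetP W1Wb).
- by move=> a b; rewrite !inE => /andP [_ h1] /andP [_ h2]; apply: leq_trans h2.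
- apply/fsetP => w; rewrite !inE; case: (w \in W1) => //=; by case: ltnP.
Qed.

Lemma large_sup e Z W0 : 0 < e -> large e Z -> Z `<=` W0 -> (forall w, w \in W0 -> 0 < w) -> large e W0.
Proof.
elim: e Z W0 => // -[|e] IH Z W0 _ /=.
  case=> m [mZ mmin mc] ZW pos.
  have W0ne : W0 != fset0 by apply/fset0Pn; exists m; apply: (fsubsetP ZW).
  have [w wW wmin] := fmin_ex W0ne.
  exists w; split => //.
  have := wmin m (fsubsetP ZW m mZ); have := fsubset_leq_card ZW; lia.
case=> m [X1 [mZ mmin eZ X1gt tl]] ZW pos.
have W0ne : W0 != fset0 by apply/fset0Pn; exists m; apply: (fsubsetP ZW).
have [w wW wmin] := fmin_ex W0ne.
have wm : w <= m := wmin m (fsubsetP ZW m mZ).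
exists w, (W0 `\ w); split => //.
- by rewrite fsetD1K.
- by move=> x; rewrite !inE => /andP [hne xW]; rewrite ltn_neqAle eq_sym hne wmin.
apply: (@tl_sup _ W0 _ _ w m X1) => //.
- by move=> A A' lA sAA' sA'W; apply: (IH A A' isT lA sAA') => x /(fsubsetP sA'W) /pos.
- by move=> A lA; exact: large_ne (isT : 0 < e.+1) lA.
- exact: pos.
- apply/fsubsetP => x xX1; rewrite !inE.
  have hx := X1gt x xX1.
  rewrite (fsubsetP ZW x) ?andbT; last by rewrite eZ inE xX1 orbT.
  by apply: contraTneq hx => ->; rewrite -leqNgt.
- exact: fsubD1set.
Qed.

Definition xsort (X : {fset nat}) := sort leq (enum_fset X).
Definition idx (X : {fset nat}) x := index x (xsort X).
Definition Al (X : {fset nat}) p := [fset x in X | p %| idx X x].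

Lemma mem_xsort (X : {fset nat}) x : (x \in xsort X) = (x \in X).
Proof. by rewrite /xsort mem_sort. Qed.

Lemma uniq_xsort (X : {fset nat}) : uniq (xsort X).
Proof. by rewrite /xsort sort_uniq fset_uniq. Qed.

Lemma size_xsort (X : {fset nat}) : size (xsort X) = #|` X|.
Proof. by rewrite /xsort size_sort. Qed.

Lemma sorted_xsort (X : {fset nat}) : sorted leq (xsort X).
Proof. by apply: sort_sorted; exact: leq_total. Qed.

Lemma sorted_xsort_lt (X : {fset nat}) : sorted ltn (xsort X).
Proof. by rewrite ltn_sorted_uniq_leq uniq_xsort sorted_xsort. Qed.

Lemma nth_xsort_lt (X : {fset nat}) t1 t2 : t1 < t2 -> t2 < size (xsort X) -> nth 0 (xsort X) t1 < nth 0 (xsort X) t2.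
Proof.
move=> h12 h2; apply: (sorted_ltn_nth ltn_trans 0 (sorted_xsort_lt X)) => //.
by rewrite inE (ltn_trans h12).
Qed.

Lemma nth_xsort_le (X : {fset nat}) t1 t2 : t1 <= t2 -> t2 < size (xsort X) -> nth 0 (xsort X) t1 <= nth 0 (xsort X) t2.
Proof.
move=> h12 h2; apply: (sorted_leq_nth leq_trans leqnn 0 (sorted_xsort X)) => //.
by rewrite inE (leq_ltn_trans h12).
Qed.

Lemma nth_xsort_in (X : {fset nat}) t : t < #|` X| -> nth 0 (xsort X) t \in X.
Proof. by move=> h; rewrite -mem_xsort mem_nth // size_xsort. Qed.

Lemma idx_nth (X : {fset nat}) t : t < #|` X| -> idx X (nth 0 (xsort X) t) = t.
Proof. by move=> h; rewrite /idx index_uniq ?uniq_xsort // size_xsort. Qed.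

Lemma nth_idx (X : {fset nat}) x : x \in X -> nth 0 (xsort X) (idx X x) = x.
Proof. by move=> h; rewrite /idx nth_index // mem_xsort. Qed.

Lemma idx_lt_card (X : {fset nat}) x : x \in X -> idx X x < #|` X|.
Proof. by move=> h; rewrite /idx -size_xsort index_mem mem_xsort. Qed.

Lemma idx_mono (X : {fset nat}) x y : x \in X -> y \in X -> x < y -> idx X x < idx X y.
Proof.
move=> xX yX lt; rewrite ltnNge; apply/negP => h.
have := @nth_xsort_le X _ _ h; rewrite size_xsort => /(_ (idx_lt_card xX)).
by rewrite !nth_idx // leqNgt lt.
Qed.

Lemma idx_mono_le (X : {fset nat}) x y : x \in X -> y \in X -> x <= y -> idx X x <= idx X y.
Proof.
move=> xX yX; rewrite leq_eqVlt => /orP [/eqP ->|lt]//.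
by apply: ltnW; apply: idx_mono.
Qed.

Definition contig (X B : {fset nat}) :=
  forall x a b, x \in X -> a \in B -> b \in B -> a <= x -> x <= b -> x \in B.

Lemma contig_refl (X : {fset nat}) : contig X X.
Proof. by move=> x a b xX. Qed.

Lemma contig_U1 (X : {fset nat}) m (R : {fset nat}) : contig X (m |` R) -> (forall r, r \in R -> m < r) -> contig X R.
Proof.
move=> hc hlt x a b xX aR bR ax xb.
have := hc x a b xX; rewrite !inE aR bR !orbT => /(_ isT isT ax xb) /orP [/eqP exm|] //.
by have := hlt a aR; rewrite -exm ltnNge ax.
Qed.

Lemma contig_Ul (X A R : {fset nat}) : contig X (A `|` R) -> fset_lt A R -> contig X A.
Proof.
move=> hc hlt x a b xX aA bA ax xb.
have := hc x a b xX; rewrite !inE aA bA /= => /(_ isT isT ax xb) /orP [] // xR.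
by have := hlt b x bA xR; rewrite ltnNge xb.
Qed.

Lemma contig_Ur (X A R : {fset nat}) : contig X (A `|` R) -> fset_lt A R -> contig X R.
Proof.
move=> hc hlt x a b xX aR bR ax xb.
have := hc x a b xX; rewrite !inE aR bR !orbT => /(_ isT isT ax xb) /orP [] // xA.
by have := hlt x a xA aR; rewrite ltnNge ax.
Qed.

Lemma align (X : {fset nat}) G (B : {fset nat}) : 0 < G -> B `<=` X -> contig X B -> G <= #|` B| ->
  exists2 x, x \in B & G %| idx X x.
Proof.
move=> G0 BX cB GB.
have Bne : B != fset0 by rewrite -cardfs_eq0 -lt0n (leq_trans G0).
have [a aB amin] := fmin_ex Bne.
set b := fmax B; have bB : b \in B := fmax_in Bne.
have aX : a \in X by apply: (fsubsetP BX).
have bX : b \in X by apply: (fsubsetP BX).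
set ia := idx X a; set ib := idx X b.
have cardB : #|` B| <= (ib - ia).+1.
  rewrite -(size_iota ia (ib - ia).+1) -(size_map (nth 0 (xsort X))).
  apply: uniq_leq_size; first exact: fset_uniq.
  move=> x xB; have xX : x \in X by apply: (fsubsetP BX).
  apply/mapP; exists (idx X x); last by rewrite nth_idx.
  rewrite mem_iota (idx_mono_le aX xX (amin x xB)) /=.
  have := idx_mono_le xX bX (fmax_ge xB); rewrite -/ib; lia.
have iab : ia <= ib by apply: idx_mono_le => //; apply: fmax_ge.
set t := (ia + (G - ia %% G) %% G)%N.
have Gt : G %| t.
  rewrite /dvdn /t modnDmr -modnDml subnKC ?modnn //; apply: ltnW; exact: ltn_pmod.
have tlt : t < ia + G by rewrite /t ltn_add2l ltn_pmod.
have tib : t <= ib by lia.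
have tsz : t < #|` X| by apply: leq_ltn_trans tib _; apply: idx_lt_card.
exists (nth 0 (xsort X) t); last by rewrite idx_nth.
apply: (cB _ a b (nth_xsort_in tsz) aB bB).
- rewrite -(nth_idx aX); apply: nth_xsort_le; first by rewrite /t leq_addr.
  by rewrite size_xsort.
- rewrite -(nth_idx bX); apply: nth_xsort_le => //.
  by rewrite size_xsort idx_lt_card.
Qed.

Lemma cnt_chain (X : {fset nat}) p k y y' : 0 < p -> 0 < k -> y \in Al X (p * k) -> y' \in Al X (p * k) -> y < y' ->
  k <= cnt (Al X p) y y'.
Proof.
move=> p0 k0; rewrite !inE => /andP [yX dy] /andP [y'X dy'] lt.
set iy := idx X y; set iy' := idx X y'.
have ilt : iy < iy' by apply: idx_mono.
have hstep : iy + p * k <= iy'.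
  have : p * k %| iy' - iy by apply: dvdn_sub.
  move/(dvdn_leq _); rewrite subn_gt0 => /(_ ilt); lia.
have sz : iy' < #|` X| by apply: idx_lt_card.
rewrite /cnt -(size_iota 0 k) -(size_map (fun s => nth 0 (xsort X) (iy + s.+1 * p))).
have hin : forall s, s < k -> iy + s.+1 * p < #|` X|.
  move=> s sk; apply: leq_ltn_trans sz; apply: leq_trans hstep.
  by rewrite leq_add2l mulnC leq_mul2l sk orbT.
apply: uniq_leq_size.
  rewrite map_inj_in_uniq ?iota_uniq // => s1 s2; rewrite !mem_iota /= => h1 h2 e.
  have := congr1 (idx X) e; rewrite !idx_nth ?hin // => /eqP.
  by rewrite eqn_add2l eqn_pmul2r // => /eqP [].
move=> x /mapP [s]; rewrite mem_iota /= => sk ->.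
have tin := hin s sk.
rewrite !inE nth_xsort_in //= idx_nth //.
apply/and3P; split.
- apply: dvdn_add; last exact: dvdn_mull.
  by apply: dvdn_trans dy; apply: dvdn_mulr.
- rewrite -{1}(nth_idx yX); apply: nth_xsort_lt; first by rewrite -/iy -[X in X < _]addn0 ltn_add2l muln_gt0 p0.
  by rewrite size_xsort.
- rewrite -(nth_idx y'X); apply: nth_xsort_le; last by rewrite size_xsort.
  by apply: leq_trans hstep; rewrite leq_add2l mulnC leq_mul2l sk orbT.
Qed.

Lemma inner_base (X : {fset nat}) G : 0 < G -> forall n n' (W : {fset nat}), n <= n' ->
  times_large (large 1) n' W -> W `<=` X -> contig X W -> (forall w, w \in W -> G <= w) ->
  exists Z' : {fset nat}, [/\ Z' `<=` Al X G, Z' `<=` W & #|` Z'| = n].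
Proof.
move=> G0; elim=> [|n IH] n' W hn tl WX cW GW.
  by exists fset0; rewrite cardfs0 !fsub0set.
case: n' hn tl => // n' hn /= [B [W' [lB tW' lt eW]]].
have BW : B `<=` W by rewrite eW fsubsetUl.
have W'W : W' `<=` W by rewrite eW fsubsetUr.
have cB : contig X B by apply: (contig_Ul (R := W')) => //; rewrite -eW.
have cW' : contig X W' by apply: (contig_Ur (A := B)) => //; rewrite -eW.
have [bm bmB bmmin] := fmin_ex (large_ne (isT : 0 < 1) lB).
have GB : G <= #|` B|.
  apply: (leq_trans _ (ltnW (@large_card 1 B bm isT lB bmB bmmin))).
  by apply: GW; apply: (fsubsetP BW).
have [x xB xal] := align G0 (fsubset_trans BW WX) cB GB.
have [Z'' [Z''Al Z''W' cZ'']] := IH n' W' hn tW' (fsubset_trans W'W WX) cW'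
  (fun w hw => GW w (fsubsetP W'W w hw)).
exists (x |` Z''); split.
- apply/fsubsetP => z; move/fset1UP => [->|zZ]; last exact: (fsubsetP Z''Al).
  by rewrite !inE xal (fsubsetP WX) // (fsubsetP BW).
- apply/fsubsetP => z; move/fset1UP => [->|zZ]; first exact: (fsubsetP BW).
  by apply: (fsubsetP W'W); apply: (fsubsetP Z''W').
- rewrite cardfsU1 cZ''; case: (boolP (x \in Z'')) => // xZ.
  have := lt x x xB (fsubsetP Z''W' x xZ); by rewrite ltnn.
Qed.

Lemma inner_step (X : {fset nat}) G e : 0 < G ->
  (forall c (V : {fset nat}), V `<=` X -> contig X V -> large (e.*2.+2) V ->
     (forall v, v \in V -> c < v) -> (forall v, v \in V -> G <= v) -> c \in Al X G -> 0 < c ->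
     exists Z, [/\ Z `<=` Al X G, Z `<=` c |` V, c \in Z & large e.+1 Z]) ->
  forall n n' (W : {fset nat}), n <= n' ->
  times_large (large (e.*2.+3)) n' W -> W `<=` X -> contig X W -> (forall w, w \in W -> G <= w) ->
  (forall w, w \in W -> 2 <= w) ->
  exists Z' : {fset nat}, [/\ Z' `<=` Al X G, Z' `<=` W & times_large (large e.+1) n Z'].
Proof.
move=> G0 IHe; elim=> [|n IH] n' W hn tl WX cW GW W2.
  by exists fset0; rewrite !fsub0set.
case: n' hn tl => // n' hn /= [B [W' [lB tW' lt eW]]].
have BW : B `<=` W by rewrite eW fsubsetUl.
have W'W : W' `<=` W by rewrite eW fsubsetUr.
have cB : contig X B by apply: (contig_Ul (R := W')) => //; rewrite -eW.
have cW' : contig X W' by apply: (contig_Ur (A := B)) => //; rewrite -eW.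
case: lB => b [B1 [bB bmin eB B1gt tB1]].
have b2 : 2 <= b by apply: W2; apply: (fsubsetP BW).
case: b b2 bB bmin eB B1gt tB1 => [|[|b]] // _ bB bmin eB B1gt tB1.
case: tB1 => [B_1 [R1 [lB_1 tR1 lt1 eB1]]].
case: tR1 => [B_2 [R2 [lB_2 _ lt2 eR1]]].
have B1B : B1 `<=` B by rewrite eB fsubsetU1.
have B_1B1 : B_1 `<=` B1 by rewrite eB1 fsubsetUl.
have R1B1 : R1 `<=` B1 by rewrite eB1 fsubsetUr.
have B_2R1 : B_2 `<=` R1 by rewrite eR1 fsubsetUl.
have B_1W : B_1 `<=` W := fsubset_trans B_1B1 (fsubset_trans B1B BW).
have B_2B : B_2 `<=` B := fsubset_trans B_2R1 (fsubset_trans R1B1 B1B).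
have B_2W : B_2 `<=` W := fsubset_trans B_2B BW.
have cB1 : contig X B1 by apply: (contig_U1 (m := b.+2)) => //; rewrite -eB.
have cB_1 : contig X B_1 by apply: (contig_Ul (R := R1)) => //; rewrite -eB1.
have cR1 : contig X R1 by apply: (contig_Ur (A := B_1)) => //; rewrite -eB1.
have cB_2 : contig X B_2 by apply: (contig_Ul (R := R2)) => //; rewrite -eR1.
have [bm bmB bmmin] := fmin_ex (large_ne (isT : 0 < e.*2.+2) lB_1).
have GB : G <= #|` B_1|.
  apply: (leq_trans _ (ltnW (@large_card (e.*2.+2) B_1 bm isT lB_1 bmB bmmin))).
  by apply: GW; apply: (fsubsetP B_1W).
have [c1 c1B c1al] := align G0 (fsubset_trans B_1W WX) cB_1 GB.
have c1Al : c1 \in Al X G by rewrite !inE c1al (fsubsetP WX) // (fsubsetP B_1W).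
have [Z1 [Z1Al Z1sub c1Z lZ1]] : exists Z, [/\ Z `<=` Al X G, Z `<=` c1 |` B_2, c1 \in Z & large e.+1 Z].
  apply: IHe => //.
  - exact: fsubset_trans B_2W WX.
  - by move=> v vB; apply: lt1 => //; apply: (fsubsetP B_2R1).
  - by move=> v vB; apply: GW; apply: (fsubsetP B_2W).
  - by apply: leq_trans (W2 c1 (fsubsetP B_1W c1 c1B)).
have [Z'' [Z''Al Z''W' tZ'']] := IH n' W' hn tW' (fsubset_trans W'W WX) cW'
  (fun w hw => GW w (fsubsetP W'W w hw)) (fun w hw => W2 w (fsubsetP W'W w hw)).
have Z1B : Z1 `<=` B.
  apply: fsubset_trans Z1sub _; apply/fsubsetP => z; move/fset1UP => [->|zB].
    by apply: (fsubsetP B1B); apply: (fsubsetP B_1B1).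
  exact: (fsubsetP B_2B).
exists (Z1 `|` Z''); split.
- by rewrite fsubUset Z1Al Z''Al.
- by rewrite fsubUset (fsubset_trans Z1B BW) (fsubset_trans Z''W' W'W).
- exists Z1, Z''; split => //.
  by move=> a a' aZ a'Z; apply: lt; [apply: (fsubsetP Z1B) | apply: (fsubsetP Z''W')].
Qed.

Lemma M_lemma (X : {fset nat}) G : 0 < G -> forall e c (V : {fset nat}),
  V `<=` X -> contig X V -> large (e.*2.+2) V ->
  (forall v, v \in V -> c < v) -> (forall v, v \in V -> G <= v) -> c \in Al X G -> 0 < c ->
  exists Z, [/\ Z `<=` Al X G, Z `<=` c |` V, c \in Z & large e.+1 Z].
Proof.
move=> G0; elim=> [|e IHe] c V VX cV lV cVlt GV cAl c0.
  case: lV => v [V1 [vV vmin eV V1gt tV1]].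
  have V1V : V1 `<=` V by rewrite eV fsubsetU1.
  have cV1 : contig X V1 by apply: (contig_U1 (m := v)) => //; rewrite -eV.
  have [Z' [Z'Al Z'V1 cZ']] := inner_base G0 (ltnW (cVlt v vV)) tV1 (fsubset_trans V1V VX) cV1
    (fun w hw => GV w (fsubsetP V1V w hw)).
  have cZ'lt : forall z, z \in Z' -> c < z.
    by move=> z zZ; apply: cVlt; apply: (fsubsetP V1V); apply: (fsubsetP Z'V1).
  exists (c |` Z'); split.
  - by rewrite fsubUset Z'Al andbT fsub1set.
  - by apply: fsetUS; apply: fsubset_trans Z'V1 V1V.
  - by rewrite fset1U1.
  - exists c; split; first by rewrite fset1U1.
    + by move=> z; rewrite !inE => /orP [/eqP ->|/cZ'lt /ltnW].
    + rewrite cardfsU1 cZ'; case: (boolP (c \in Z')) => // /cZ'lt; by rewrite ltnn.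
case: lV => v [V1 [vV vmin eV V1gt tV1]].
have V1V : V1 `<=` V by rewrite eV fsubsetU1.
have cV1 : contig X V1 by apply: (contig_U1 (m := v)) => //; rewrite -eV.
have [Z' [Z'Al Z'V1 tZ']] := inner_step G0 IHe (ltnW (cVlt v vV)) tV1 (fsubset_trans V1V VX) cV1
    (fun w hw => GV w (fsubsetP V1V w hw))
    (fun w hw => leq_ltn_trans (leq_trans c0 (ltnW (cVlt v vV))) (V1gt w hw)).
have cZ'lt : forall z, z \in Z' -> c < z.
  by move=> z zZ; apply: cVlt; apply: (fsubsetP V1V); apply: (fsubsetP Z'V1).
exists (c |` Z'); split.
- by rewrite fsubUset Z'Al andbT fsub1set.
- by apply: fsetUS; apply: fsubset_trans Z'V1 V1V.
- by rewrite fset1U1.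
- exists c, Z'; split => //; first by rewrite fset1U1.
  by move=> z; rewrite !inE => /orP [/eqP ->|/cZ'lt /ltnW].
Qed.

Lemma sq_le m : m * m <= 2 ^ m.+1.
Proof.
elim: m => // m IH.
have h2 := ltn_expl m (isT : 1 < 2).
have e1 : 2 ^ m.+2 = 2 * 2 ^ m.+1 by rewrite expnS.
have e2 : 2 ^ m.+1 = 2 * 2 ^ m by rewrite expnS.
rewrite e1; lia.
Qed.

Lemma idx_min (X : {fset nat}) m : m \in X -> (forall x, x \in X -> m <= x) -> idx X m = 0.
Proof.
move=> mX mmin; apply/eqP; rewrite -leqn0 leqNgt; apply/negP => h.
have hs : idx X m < size (xsort X) by rewrite size_xsort idx_lt_card.
have := nth_xsort_lt h hs; rewrite nth_idx // ltnNge mmin //.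
by apply: nth_xsort_in; rewrite -size_xsort (leq_ltn_trans _ hs).
Qed.

Lemma main_aux (d k i : nat) (X : {fset nat}) :
  0 < d -> 1 <= k ->
  large (2 * d + 1)%N X ->
  (forall x, x \in X -> maxn k (maxn i 2) < x) ->
  persistent d 1 k i X.
Proof.
case: d => // d' _ k1 hX hbig.
have e2 : (2 * d'.+1 + 1)%N = d'.*2.+3 by rewrite mul2n doubleS addn1.
rewrite e2 in hX.
case: hX => m [X1 [mX mmin eX X1gt tl]].
have hm := hbig m mX.
have km : k <= m by lia.
have im : i <= m by lia.
have [m' em] : exists m', m = m'.+3 by exists (m - 3); lia.
have X1X : X1 `<=` X by rewrite eX fsubsetU1.
have cX1 : contig X X1 by apply: (contig_U1 (m := m)) => //; rewrite -eX; apply: contig_refl.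
subst m.
case: tl => [X_1 [R1 [l1 tR1 lt1 e1]]].
case: tR1 => [X_2 [R2 [l2 tR2 lt2 e2']]].
case: tR2 => [X_3 [R3 [l3 _ lt3 e3]]].
set m := m'.+3 in mX mmin eX X1gt hm km im X1X cX1 *.
have X_1X1 : X_1 `<=` X1 by rewrite e1 fsubsetUl.
have R1X1 : R1 `<=` X1 by rewrite e1 fsubsetUr.
have X_2R1 : X_2 `<=` R1 by rewrite e2' fsubsetUl.
have R2R1 : R2 `<=` R1 by rewrite e2' fsubsetUr.
have X_3R2 : X_3 `<=` R2 by rewrite e3 fsubsetUl.
have X_3X1 : X_3 `<=` X1 := fsubset_trans X_3R2 (fsubset_trans R2R1 R1X1).
have X_3X : X_3 `<=` X := fsubset_trans X_3X1 X1X.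
have cR1 : contig X R1 by apply: (contig_Ur (A := X_1)) => //; rewrite -e1.
have cR2 : contig X R2 by apply: (contig_Ur (A := X_2)) => //; rewrite -e2'.
have cX_3 : contig X X_3 by apply: (contig_Ul (R := R3)) => //; rewrite -e3.
have [m1 m1X m1min] := fmin_ex (large_ne (isT : 0 < d'.*2.+2) l1).
have mm1 : m < m1 by apply: X1gt; apply: (fsubsetP X_1X1).
have [b1 b1X hb1] := large_exp (isT : 1 < d'.*2.+2) l1 m1X m1min (leq_ltn_trans (leq0n m) mm1).
have [m2 m2X m2min] := fmin_ex (large_ne (isT : 0 < d'.*2.+2) l2).
have b1m2 : b1 < m2 by apply: lt1 => //; apply: (fsubsetP X_2R1).
have [b2 b2X hb2] := large_exp (isT : 1 < d'.*2.+2) l2 m2X m2min (leq_ltn_trans (leq0n b1) b1m2).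
set G := k ^ i.
have G0 : 0 < G by rewrite expn_gt0 k1.
have Gb : G <= 2 ^ m2.
  have m0 : 0 < m by lia.
  apply: (@leq_trans (m ^ i)).
    by rewrite /G; case: (posnP i) => [->|ip]; rewrite ?expn0 // leq_exp2r.
  apply: (@leq_trans (m ^ m)); first exact: leq_pexp2l.
  apply: (@leq_trans ((2 ^ m) ^ m)); first by rewrite leq_exp2r // ltnW // ltn_expl.
  rewrite -expnM; apply: (@leq_trans (2 ^ (2 ^ m.+1))); first exact: leq_pexp2l (sq_le m).
  apply: leq_pexp2l => //; apply: leq_trans (ltnW b1m2).
  by apply: leq_trans hb1; apply: leq_pexp2l.
have GX3 : forall v, v \in X_3 -> G <= v.
  move=> v vX; apply: leq_trans Gb _; apply: leq_trans hb2 _; apply: ltnW.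
  by apply: lt2 => //; apply: (fsubsetP X_3R2).
have mAl : forall p, m \in Al X p by move=> p; rewrite !inE mX (idx_min mX mmin) dvdn0.
have pos : forall w, w \in X -> 0 < w by move=> w /hbig; apply: leq_ltn_trans.
have [Z [ZAl _ _ lZ]] := M_lemma G0 X_3X cX_3 l3 (fun v hv => X1gt v (fsubsetP X_3X1 v hv)) GX3 (mAl G) isT.
have AlX : forall p, Al X p `<=` X.
  by move=> p; apply/fsubsetP => x; rewrite !inE => /andP [].
have lAl : large d'.+1 (Al X G).
  by apply: (@large_sup d'.+1 Z (Al X G) isT lZ ZAl) => w /(fsubsetP (AlX G)) /pos.
have chain : forall j, j <= i -> persistent d'.+1 1 k j (Al X (k ^ (i - j))).
  elim=> [_|j IH ji].
    rewrite subn0 /=; split; first exact: large_ne lAl.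
    by exists (Al X G), fset0; split => //; rewrite fsetU0.
  set p := k ^ (i - j.+1).
  have ep : k ^ (i - j) = (p * k)%N by rewrite /p -expnSr subnSK.
  have p0 : 0 < p by rewrite expn_gt0 k1.
  have sub : Al X (k ^ (i - j)) `<=` Al X p.
    rewrite ep; apply/fsubsetP => x; rewrite !inE => /andP [xX hd]; rewrite xX /=.
    exact: dvdn_trans (dvdn_mulr k (dvdnn p)) hd.
  split; first by apply/fset0Pn; exists m; apply: mAl.
  exists (Al X (k ^ (i - j))); split => //; first exact: IH (ltnW ji).
  move=> T qT C hC; apply: step_lemma qT C hC => //.
    by apply/fset0Pn; exists m; apply: mAl.
  move=> y y' yY y'Y lt; rewrite ep in yY y'Y.
  have := cnt_chain p0 k1 yY y'Y lt => hc.
  apply: leq_trans (ltn_expl k (isT : 1 < 2)) _.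
  exact: leq_pexp2l.
have := chain i (leqnn i); rewrite subnn expn0.
suff -> : Al X 1 = X by [].
by apply/fsetP => x; rewrite !inE dvd1n andbT.
Qed.

Close Scope fset_scope.

Theorem corollary2p12 (d k i : nat) (X : {fset nat}) :
  0 < d -> 1 <= k ->
  large (2 * d + 1) X ->
  (forall x, x \in X -> maxn k (maxn i 2) < x) ->
  persistent d 1 k i X.
Proof. exact: main_aux. Qed.
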